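(* There is no continuous real function on $\widetilde{\mathrm{Sp}}(2n)$ which is strictly increasing along every timelike curve and invariant under conjugacy.
   Context: $\omega_0=\sum_j\mathrm{d}x_j\wedge\mathrm{d}y_j$ on $\mathbb{R}^{2n}$, $\mathrm{Sp}(2n)$ its linear symplectic group, $\widetilde{\mathrm{Sp}}(2n)$ its universal cover (a Lie group). $\mathrm{sp}(2n)=\{X:(u,v)\mapsto\omega_0(u,Xv)\text{ symmetric}\}$ and $\mathrm{sp}^+(2n)$ the subset where this form is positive definite. A $C^1$ curve $W$ in $\mathrm{Sp}(2n)$ is timelike if $W'(t)W(t)^{-1}\in\mathrm{sp}^+(2n)$ for all $t$; a curve in $\widetilde{\mathrm{Sp}}(2n)$ is timelike if its projection is. *)

(* Defs.v *)
From HB Require Import structures.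
From mathcomp Require Import all_boot all_order all_algebra.
From mathcomp Require Import all_classical all_reals all_analysis.
Set Implicit Arguments. Unset Strict Implicit. Unset Printing Implicit Defensive.
Import Order.TTheory GRing.Theory Num.Theory.
Import numFieldNormedType.Exports.
Local Open Scope classical_set_scope.
Local Open Scope ring_scope.

Section Symplectic.
Variables (R : realType) (n : nat).

(* coordinates (x_1..x_n, y_1..y_n); omega0 = sum_j dx_j /\ dy_j *)
Definition J0 : 'M[R]_(n + n) := block_mx 0 1%:M (- 1%:M) 0.

Definition omega0 (u v : 'cV[R]_(n + n)) : R := (u^T *m J0 *m v) 0 0.

Definition symplectic (A : 'M[R]_(n + n)) : Prop :=
  forall u v, omega0 (A *m u) (A *m v) = omega0 u v.

Definition sp_alg (X : 'M[R]_(n + n)) : Prop :=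
  forall u v, omega0 u (X *m v) = omega0 v (X *m u).

Definition sp_plus (X : 'M[R]_(n + n)) : Prop :=
  sp_alg X /\ forall u, u != 0 -> 0 < omega0 u (X *m u).

Definition timelike_Sp (W : R -> 'M[R]_(n + n)) (a b : R) : Prop :=
  a < b /\
  (forall t, a < t < b -> symplectic (W t)) /\
  (forall t, a < t < b -> derivable W t 1) /\
  {in `]a, b[, continuous (derive1 W)} /\
  (forall t, a < t < b -> sp_plus (derive1 W t *m invmx (W t))).

End Symplectic.

Section Topo.
Variable R : realType.

Definition I01 : set R := `[0, 1]%classic.

Definition path_in {X : topologicalType} (f : R -> X) : Prop :=
  {within I01, continuous f}.

Definition path_connected (X : topologicalType) : Prop :=
  forall x y : X, exists f : R -> X, path_in f /\ f 0 = x /\ f 1 = y.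

Definition simply_connected (X : topologicalType) : Prop :=
  path_connected X /\
  forall f : R -> X, path_in f -> f 0 = f 1 ->
    exists H : R * R -> X,
      {within I01 `*` I01, continuous H} /\
      (forall s, s \in I01 -> H (s, 0) = f s) /\
      (forall s, s \in I01 -> H (s, 1) = f 0) /\
      (forall t, t \in I01 -> H (0, t) = f 0 /\ H (1, t) = f 0).

Definition covering_onto {X Y : topologicalType} (p : X -> Y) (S : set Y) :
  Prop :=
  continuous p /\ p @` setT = S /\
  forall y, S y -> exists U : set Y, open U /\ U y /\
    exists (I : Type) (V : I -> set X),
      (forall i, open (V i)) /\
      p @^-1` U = \bigcup_i V i /\
      (forall i j, i <> j -> V i `&` V j = set0) /\
      (forall i, set_inj (V i) p) /\
      (forall i, p @` V i = U `&` S) /\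
      (forall i W, open W -> W `<=` V i ->
         exists O : set Y, open O /\ p @` W = O `&` S).

Definition topological_group (G : topologicalType) (mul : G -> G -> G)
  (inv : G -> G) (e : G) : Prop :=
  (forall x y z, mul x (mul y z) = mul (mul x y) z) /\
  (forall x, mul e x = x) /\ (forall x, mul x e = x) /\
  (forall x, mul (inv x) x = e) /\ (forall x, mul x (inv x) = e) /\
  continuous (fun q : G * G => mul q.1 q.2) /\ continuous inv.

End Topo.

Definition universal_cover_Sp (R : realType) (n : nat) (G : topologicalType)
  (mul : G -> G -> G) (inv : G -> G) (e : G) (p : G -> 'M[R]_(n + n)) : Prop :=
  topological_group mul inv e /\
  simply_connected R G /\
  covering_onto p (fun A => symplectic A) /\
  (forall g h, p (mul g h) = p g *m p h).

Definition timelike_cover (R : realType) (n : nat) (G : topologicalType)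
  (p : G -> 'M[R]_(n + n)) (c : R -> G) (a b : R) : Prop :=
  {in `]a, b[, continuous c} /\ timelike_Sp (p \o c) a b.

(* Main.v *)
Require Import Defs.
From HB Require Import structures.
From mathcomp Require Import all_boot all_order all_algebra.
From mathcomp Require Import all_classical all_reals all_analysis.
From mathcomp Require Import ring lra.
Import Order.TTheory GRing.Theory Num.Theory.
Import numFieldNormedType.Exports.
Local Open Scope ring_scope.
Set Implicit Arguments. Unset Strict Implicit.
Set Default Timeout 30.

Section Der.
Variables (R : realType) (m k : nat).
Lemma is_derive_scalel (f : R -> R) (M : 'M[R]_(m, k)) (x df : R) :
  is_derive x 1 f df -> is_derive x 1 (fun t => f t *: M) (df *: M).
Proof.
move=> [fd fv].
have E i j : (fun t => (f t *: M) i j) = f * cst (M i j).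
  by apply/funext => t; rewrite mxE.
have dij i j : derivable (fun t => (f t *: M) i j) x 1.
  by rewrite E; apply: derivableM => //; exact: derivable_cst.
have dM : derivable (fun t => f t *: M) x 1 by apply/derivable_mxP.
apply: DeriveDef => //.
rewrite derive_mx //; apply/matrixP => i j; rewrite !mxE E deriveM //.
by rewrite derive_cst fv scaler0 add0r /= -[_ *: _]/(_ * _) mulrC.
Qed.
End Der.

Section MxAlg.
Variables (R : realType) (n : nat).
Definition K (a b c d : R) : 'M[R]_(n + n) := block_mx a%:M b%:M c%:M d%:M.

Lemma scalar_mxD' (a b : R) : (a + b)%:M = a%:M + b%:M :> 'M[R]_n.
Proof. exact: raddfD. Qed.

Lemma K_mul a b c d a' b' c' d' :
  K a b c d *m K a' b' c' d' =
  K (a * a' + b * c') (a * b' + b * d') (c * a' + d * c') (c * b' + d * d').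
Proof. by rewrite /K mulmx_block -!scalar_mxM -!scalar_mxD'. Qed.

Lemma K_tr a b c d : (K a b c d)^T = K a c b d.
Proof. by rewrite /K tr_block_mx !tr_scalar_mx. Qed.

Lemma J0K : J0 R n = K 0 1 (-1) 0.
Proof. by rewrite /J0 /K raddf0 raddfN. Qed.

Lemma K1 : K 1 0 0 1 = 1%:M.
Proof. by rewrite /K raddf0 -scalar_mx_block. Qed.

Lemma KD a b c d a' b' c' d' :
  K a b c d + K a' b' c' d' = K (a + a') (b + b') (c + c') (d + d').
Proof. by rewrite /K add_block_mx -!scalar_mxD'. Qed.

Lemma KZ k a b c d : k *: K a b c d = K (k * a) (k * b) (k * c) (k * d).
Proof. by rewrite /K scale_block_mx !scale_scalar_mx. Qed.

Lemma J0J0 : J0 R n *m J0 R n = - 1%:M.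
Proof.
rewrite J0K K_mul -K1.
rewrite -[- K 1 0 0 1]scaleN1r KZ; congr K; ring.
Qed.

Lemma entry_eq (M N : 'M[R]_(n + n)) :
  (forall u v : 'cV[R]_(n + n), (u^T *m M *m v) 0 0 = (u^T *m N *m v) 0 0) ->
  M = N.
Proof.
move=> H; apply/matrixP => i j.
have := H (delta_mx i 0) (delta_mx j 0).
by rewrite trmx_delta -!rowE -!colE !mxE.
Qed.

Lemma symplecticE A : symplectic A -> A^T *m J0 R n *m A = J0 R n.
Proof.
move=> sA; apply: entry_eq => u v.
have := sA u v; rewrite /omega0 trmx_mul !mulmxA => ->.
by [].
Qed.

Lemma symplectic_linv A : symplectic A -> (- (J0 R n *m A^T *m J0 R n)) *m A = 1%:M.
Proof.
move=> /symplecticE sA.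
by rewrite mulNmx -!mulmxA [A^T *m _]mulmxA sA J0J0 opprK.
Qed.

Lemma K_symplectic a b c d : a * d - b * c = 1 -> symplectic (K a b c d).
Proof.
move=> det u v; rewrite /omega0 trmx_mul.
have E : (K a b c d)^T *m J0 R n *m K a b c d = J0 R n.
  rewrite J0K K_tr !K_mul; congr K; first (by ring); last (by ring).
    by transitivity (a * d - b * c); [ring | rewrite det].
  by transitivity (- (a * d - b * c)); [ring | rewrite det].
by rewrite -!mulmxA [(K a b c d)^T *m _]mulmxA [_ *m (K a b c d *m v)]mulmxA E.
Qed.

Lemma pd2 (p b s x y : R) : 0 < p -> 0 < p * s - b ^+ 2 ->
  0 <= p * x ^+ 2 + 2 * b * (x * y) + s * y ^+ 2 /\
  (x != 0 \/ y != 0 -> 0 < p * x ^+ 2 + 2 * b * (x * y) + s * y ^+ 2).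
Proof.
move=> p0 D0.
have E : p * (p * x ^+ 2 + 2 * b * (x * y) + s * y ^+ 2) =
   (p * x + b * y) ^+ 2 + (p * s - b ^+ 2) * y ^+ 2 by ring.
have ge : 0 <= p * (p * x ^+ 2 + 2 * b * (x * y) + s * y ^+ 2).
  by rewrite E addr_ge0 ?sqr_ge0 // mulr_ge0 ?sqr_ge0 // ltW.
split; first by rewrite -(pmulr_rge0 _ p0).
rewrite -(pmulr_rgt0 _ p0) E.
have [->|y0] := eqVneq y 0 => xy.
  case: xy => [x0|/negP[]//].
  by rewrite expr0n /= !mulr0 !addr0 lt_def sqr_ge0 andbT sqrf_eq0 mulf_neq0 // gt_eqF.
apply: ltr_wpDl; first exact: sqr_ge0.
by rewrite mulr_gt0 // lt_def sqr_ge0 andbT sqrf_eq0.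
Qed.

Lemma quadK (u : 'cV[R]_(n + n)) p q r s :
  (u^T *m K p q r s *m u) 0 0 =
  \sum_i (p * (usubmx u i 0) ^+ 2 + (q + r) * (usubmx u i 0 * dsubmx u i 0)
          + s * (dsubmx u i 0) ^+ 2).
Proof.
set x := usubmx u; set y := dsubmx u.
rewrite -[u]vsubmxK -/x -/y tr_col_mx /K mul_row_block mul_row_col !mulmxDl.
rewrite !mul_mx_scalar -!scalemxAl !mxE.

rewrite !mulr_sumr -!big_split /=.
apply: eq_bigr => i _; rewrite !mxE; ring.
Qed.

Lemma omega_J0 (u v : 'cV[R]_(n + n)) X :
  omega0 u (X *m v) = (u^T *m (J0 R n *m X) *m v) 0 0.
Proof. by rewrite /omega0 !mulmxA. Qed.

Lemma sp_plus_K X p b s : J0 R n *m X = K p b b s -> 0 < p -> 0 < p * s - b ^+ 2 ->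
  sp_plus X.
Proof.
move=> JX p0 D0; split.
  move=> u v; rewrite !omega_J0 JX.
  have -> : (u^T *m K p b b s *m v) 0 0 = ((u^T *m K p b b s *m v)^T) 0 0.
    by rewrite [RHS]mxE.
  by rewrite !trmx_mul trmxK K_tr mulmxA.
move=> u u0; rewrite omega_J0 JX quadK.
set x := usubmx u; set y := dsubmx u.
have ge i := (@pd2 p b s (x i 0) (y i 0) p0 D0).1.
have gt i := (@pd2 p b s (x i 0) (y i 0) p0 D0).2.
have bb : b + b = 2 * b by ring.
rewrite lt_def; apply/andP; split; last first.
  by apply: sumr_ge0 => i _; rewrite bb; exact: ge.
apply/eqP => /psumr_eq0P H.
move/eqP: u0; apply; rewrite -[u]vsubmxK -/x -/y.
suff [-> ->] : x = 0 /\ y = 0 by rewrite col_mx0.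
have H0 i : x i 0 = 0 /\ y i 0 = 0.
  have := H (fun j _ => ltac:(rewrite bb; exact: ge)) i isT; rewrite bb => Hi.
  case: (eqVneq (x i 0) 0) => [x0|x0]; last by have := gt i (or_introl x0); rewrite Hi ltxx.
  case: (eqVneq (y i 0) 0) => [y0|y0]; last by have := gt i (or_intror y0); rewrite Hi ltxx.
  by [].
split; apply/matrixP => i j; rewrite (ord1 j) [RHS]mxE; by case: (H0 i).
Qed.

Lemma K_decomp a b c d : K a b c d =
  a *: K 1 0 0 0 + b *: K 0 1 0 0 + c *: K 0 0 1 0 + d *: K 0 0 0 1.
Proof. by rewrite !KZ !KD; congr K; ring. Qed.

Definition Kp (pa pb pc pd : {poly R}) (t : R) := K pa.[t] pb.[t] pc.[t] pd.[t].

Lemma Kp_derive (pa pb pc pd : {poly R}) (t : R) :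
  is_derive t 1 (Kp pa pb pc pd) (Kp pa^`() pb^`() pc^`() pd^`() t).
Proof.
have -> : Kp pa pb pc pd = (fun t => pa.[t] *: K 1 0 0 0) + (fun t => pb.[t] *: K 0 1 0 0)
   + (fun t => pc.[t] *: K 0 0 1 0) + (fun t => pd.[t] *: K 0 0 0 1).
  by apply/funext => s; rewrite /Kp K_decomp.
have h1 := @is_derive_scalel _ _ _ _ (K 1 0 0 0) _ _ (is_derive_poly pa t).
have h2 := @is_derive_scalel _ _ _ _ (K 0 1 0 0) _ _ (is_derive_poly pb t).
have h3 := @is_derive_scalel _ _ _ _ (K 0 0 1 0) _ _ (is_derive_poly pc t).
have h4 := @is_derive_scalel _ _ _ _ (K 0 0 0 1) _ _ (is_derive_poly pd t).
have := is_deriveD (is_deriveD (is_deriveD h1 h2) h3) h4.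
by rewrite [Kp _ _ _ _ t]/Kp [K _.[t] _ _ _]K_decomp.
Qed.

Lemma Kp_cont (pa pb pc pd : {poly R}) : continuous (Kp pa pb pc pd).
Proof.
move=> t; apply: differentiable_continuous; apply/derivable1_diffP.
by have [] := Kp_derive pa pb pc pd t.
Qed.

Lemma invmx_eq (A B : 'M[R]_(n + n)) : A *m B = 1%:M -> invmx A = B.
Proof.
move=> AB; have [uA _] := mulmx1_unit AB.
by rewrite -[invmx A]mulmx1 -AB mulmxA mulVmx // mul1mx.
Qed.


Definition gA : {poly R} := 1 + 'X^2.
Definition gB : {poly R} := 'X.
Definition gD : {poly R} := 1.
Definition hB : {poly R} := - 'X.
Definition wA : {poly R} := 2%:P + (3/2)%:P * 'X^2.
Definition wB : {poly R} := - ((3/2)%:P * ('X + 'X^3)).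
Definition wC : {poly R} := (3/2)%:P * 'X.
Definition wD : {poly R} := (1/2)%:P - (3/2)%:P * 'X^2.

Definition A0 : 'M[R]_(n + n) := K 2 0 0 (1/2).

Lemma L_gh t : Kp gA gB gB gD t *m Kp gD hB hB gA t = 1%:M.
Proof.
rewrite /Kp K_mul -K1 /gA /gB /gD /hB !(hornerD, hornerN, hornerX, hornerC, hornerXn, hornerM, hornerCM, hornerC); congr K; ring.
Qed.

Lemma L_W t : Kp gA gB gB gD t *m A0 *m Kp gD hB hB gA t = Kp wA wB wC wD t.
Proof.
rewrite /Kp /A0 !K_mul /gA /gB /gD /hB /wA /wB /wC /wD !(hornerD, hornerN, hornerX, hornerC, hornerXn, hornerM, hornerCM, hornerC); congr K; by field.
Qed.

Lemma L_Wi t : Kp wA wB wC wD t *m Kp wD (- wB) (- wC) wA t = 1%:M.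
Proof.
rewrite /Kp K_mul -K1 /wA /wB /wC /wD !(hornerD, hornerN, hornerX, hornerC, hornerXn, hornerM, hornerCM, hornerC); congr K; by field.
Qed.

Lemma L_g_symp t : symplectic (Kp gA gB gB gD t).
Proof. apply: K_symplectic; rewrite /gA /gB /gD !(hornerD, hornerN, hornerX, hornerC, hornerXn, hornerM, hornerCM, hornerC); ring. Qed.

Lemma L_W_symp t : symplectic (Kp wA wB wC wD t).
Proof. apply: K_symplectic; rewrite /wA /wB /wC /wD !(hornerD, hornerN, hornerX, hornerC, hornerXn, hornerM, hornerCM, hornerC); by field. Qed.

Lemma L_A0_symp : symplectic A0.
Proof. apply: K_symplectic; by field. Qed.

Lemma L_g0 : Kp gA gB gB gD 0 = 1%:M.
Proof. by rewrite /Kp -K1 /gA /gB /gD !(hornerD, hornerN, hornerX, hornerC, hornerXn, hornerM, hornerCM, hornerC); congr K; ring. Qed.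

Lemma L_pos t : t ^+ 2 < 1 ->
  sp_plus (Kp wA^`() wB^`() wC^`() wD^`() t *m Kp wD (- wB) (- wC) wA t).
Proof.
move=> t1.
apply: (@sp_plus_K _ (3/4 + 9/4 * t ^+ 2) (- (15/4 * t + 9/4 * t ^+ 3))
          (3 + 27/4 * t ^+ 2 + 9/4 * t ^+ 4)).
- rewrite J0K /Kp !K_mul /wA /wB /wC /wD !poly.derivE !(hornerD, hornerN, hornerX, hornerC, hornerXn, hornerM, hornerCM, hornerC); congr K; by field.
- have := sqr_ge0 t; lra.
- have -> : (3 / 4 + 9 / 4 * t ^+ 2) * (3 + 27 / 4 * t ^+ 2 + 9 / 4 * t ^+ 4) -
    (- (15 / 4 * t + 9 / 4 * t ^+ 3)) ^+ 2 = 9/4 * (1 - t ^+ 2) by field.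
  lra.
Qed.

End MxAlg.
Arguments K {R n}.
Arguments Kp {R n}.



Theorem proposition9p3 (R : realType) (n : nat) (G : topologicalType)
  (mul : G -> G -> G) (inv : G -> G) (e : G) (p : G -> 'M[R]_(n + n)) :
  universal_cover_Sp mul inv e p ->
  ~ (exists F : G -> R,
       continuous F /\
       (forall (c : R -> G) (a b : R), timelike_cover p c a b ->
          forall s t, a < s -> s < t -> t < b -> F (c s) < F (c t)) /\
       (forall g h : G, F (mul (mul g h) (inv g)) = F h)).
Proof.
move=> [[assoc [mul1 [mulr1' [mulV [mulVr [mulc invc]]]]]] [_ [[pcont [psurj pcov]] phom]]].
move=> [F [_ [Fmono Fconj]]].
have pS x : symplectic (p x).
  have : (p @` setT)%classic (p x) by exists x.
  by rewrite psurj.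
have pe : p e = 1%:M.
  have B := symplectic_linv (pS e).
  have ee : p e = p e *m p e by rewrite -phom mul1.
  transitivity ((- (J0 R n *m (p e)^T *m J0 R n)) *m (p e *m p e)).
    by rewrite mulmxA B mul1mx.
  by rewrite -ee.
have pinv x h : p x *m h = 1%:M -> p (inv x) = h.
  move=> xh; have ix : p (inv x) *m p x = 1%:M by rewrite -phom mulV pe.
  by rewrite -[p (inv x)]mulmx1 -xh mulmxA ix mul1mx.
have [a0 _ pa0] : (p @` setT)%classic (A0 R n) by rewrite psurj; exact: L_A0_symp.
have S1 : symplectic (1%:M : 'M[R]_(n + n)) by move=> u v; rewrite !mul1mx.
have [U [oU [U1 [I [V [oV [preU [_ [injV [imgV opV]]]]]]]]]] := pcov _ S1.
have [i0 _ Vi0e] : (\bigcup_i V i)%classic e by rewrite -preU /= pe.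
pose sg y := if pselect (exists x, V i0 x /\ p x = y) is left H then proj1_sig (cid H) else e.
have sgP y : U y -> symplectic y -> V i0 (sg y) /\ p (sg y) = y.
  move=> Uy Sy; have : (p @` V i0)%classic y by rewrite imgV.
  case=> x Vx pxy.
  rewrite /sg; case: pselect => [H|]; last by case; exists x.
  exact: (proj2_sig (cid H)).
pose g := Kp (n := n) (gA R) (gB R) (gB R) (gD R).
have gcont : continuous g by exact: Kp_cont.
have [δ δ0 Hδ] : exists2 δ : R, 0 < δ & forall t, `|t| < δ -> U (g t).
  have : nbhs (0:R) (g @^-1` U)%classic.
    apply: (gcont 0); apply: open_nbhs_nbhs; split => //; by rewrite /g L_g0.
  move/nbhs_ballP => [δ δ0 Hδ]; exists δ => // t tδ; apply: Hδ.
  by rewrite -ball_normE /ball_ /= sub0r normrN.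
pose d := Num.min δ 1.
have d0 : 0 < d by rewrite lt_min δ0 ltr01.
have dδ : d <= δ by rewrite ge_min lexx.
have d1 : d <= 1 by rewrite ge_min lexx orbT.
have hd t : -d < t < d -> U (g t) /\ t ^+ 2 < 1.
  move=> /andP[l r]; split.
    apply: Hδ; apply: lt_le_trans dδ; by rewrite ltr_norml l r.
  have l' : -1 < t by lra.
  have r' : t < 1 by lra.
  nra.
pose γ t := sg (g t).
have gS t : symplectic (g t) := L_g_symp t.
have hγ t : -d < t < d -> V i0 (γ t) /\ p (γ t) = g t.
  by move=> ht; apply: sgP; [exact: (hd t ht).1 | exact: gS].
pose c t := mul (mul (γ t) a0) (inv (γ t)).
pose W := Kp (n:=n) (wA R) (wB R) (wC R) (wD R).
have pcW t : -d < t < d -> p (c t) = W t.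
  move=> ht; have [_ pγ] := hγ t ht.
  rewrite /c !phom pγ pa0 (pinv _ (Kp (gD R) (hB R) (hB R) (gA R) t)); first exact: L_W.
  by rewrite pγ L_gh.
have Fc t : F (c t) = F a0 by rewrite /c Fconj.
suff TL : timelike_cover p c (-d) d.
  have H := Fmono c (-d) d TL 0 (d/2).
  have : F (c 0) < F (c (d/2)) by apply: H; lra.
  by rewrite !Fc ltxx.
split.
  move=> t0 ht0'; have ht0 := ht0'; move: ht0; rewrite in_itv /= => ht0.
  have γc : (γ @ t0 --> γ t0)%classic.
    move=> N; rewrite nbhsE; case=> O [oO Oγ] ON.
    have [Op [oOp imgW]] := opV i0 (O `&` V i0)%classic (openI oO (oV i0)) (@subIsetr _ _ _).
    have [Vγ0 pγ0] := hγ t0 ht0.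
    have gOp : Op (g t0).
      have : (p @` (O `&` V i0))%classic (g t0) by exists (γ t0).
      by rewrite imgW => -[].
    have N1 : nbhs t0 (g @^-1` Op)%classic := gcont t0 Op (open_nbhs_nbhs (conj oOp gOp)).
    have N2 : \forall t \near t0, t \in `]-d, d[ by exact: near_in_itvoo.
    apply: filterS (filterI N1 N2) => t [gt it].
    move: it; rewrite in_itv /= => it.
    have [Vγ pγ] := hγ t it.
    have : (p @` (O `&` V i0))%classic (g t) by rewrite imgW; split => //; exact: gS.
    case=> w [Ow Vw] pw.
    have wγ : w = γ t.
      by apply: (injV i0); [exact: mem_set | exact: mem_set | rewrite pw pγ].
    by apply: ON; rewrite -wγ.
  have h1 : ((fun t => mul (γ t) a0) @ t0 --> mul (γ t0) a0)%classic.
    apply: (@continuous_cvg _ _ _ _ _ (fun t => (γ t, a0)) (fun q : G * G => mul q.1 q.2) (γ t0, a0)).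
      exact: mulc.
    exact: cvg_pair γc (cvg_cst a0).
  have h2 : ((fun t => inv (γ t)) @ t0 --> inv (γ t0))%classic.
    apply: (@continuous_cvg _ _ _ _ _ γ inv (γ t0)); [exact: invc | exact: γc].
  apply: (@continuous_cvg _ _ _ _ _ (fun t => (mul (γ t) a0, inv (γ t))) (fun q : G * G => mul q.1 q.2) (mul (γ t0) a0, inv (γ t0))).
    exact: mulc.
  exact: cvg_pair h1 h2.
split; first lra.
have nearW t : -d < t < d -> \forall s \near t, W s = (p \o c) s.
  move=> ht; have : \forall s \near t, s \in `]-d, d[ by apply: near_in_itvoo; rewrite in_itv /=.
  by apply: filterS => s; rewrite in_itv /= => hs; rewrite /= pcW.
have Wd (t : R) : is_derive t 1 W (Kp (n:=n) (wA R)^`() (wB R)^`() (wC R)^`() (wD R)^`() t).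
  exact: Kp_derive.
have dW t : -d < t < d -> derive1 (p \o c) t = Kp (n:=n) (wA R)^`() (wB R)^`() (wC R)^`() (wD R)^`() t.
  move=> ht; rewrite derive1E -(@near_eq_derive _ _ _ W (p \o c) t 1 (nearW t ht)).
  by have [] := Wd t.
split.
  by move=> t ht; rewrite /= pcW //; exact: L_W_symp.
split.
  move=> t ht; apply: (@near_eq_derivable _ _ _ W (p \o c) t 1).
    exact: (nearW t ht).
  by have [] := Wd t.
split.
  move=> t0 ht0'; have ht0 := ht0'; move: ht0; rewrite in_itv /= => ht0.
  rewrite /continuous_at dW //.
  have nd : \forall s \near t0, Kp (n:=n) (wA R)^`() (wB R)^`() (wC R)^`() (wD R)^`() s = derive1 (p \o c) s.
    have : \forall s \near t0, s \in `]-d, d[ by exact: near_in_itvoo.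
    by apply: filterS => s; rewrite in_itv /= => hs; rewrite dW.
  apply: cvg_trans (near_eq_cvg nd) _.
  exact: Kp_cont.
move=> t ht; rewrite dW // /= pcW // (invmx_eq (@L_Wi R n t)).
exact: (@L_pos R n t (hd t ht).2).
Qed.
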